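(* Let $\{a_j\}\subset\mathbb{C}$ be a sequence of (not necessarily distinct) points in the open upper half plane, with $|a_1|\le|a_2|\le\cdots$, and suppose that for some constants $C_0$ and $\rho$, $$n(r)=\#\{j: |a_j|\le r\}\le C_0 r^\rho\quad\text{when } r\ge 1.$$ Suppose $\rho>0$ is not an integer, let $p$ be the greatest integer less than $\rho$, and set $$f(z)=\prod_{n=1}^\infty\frac{E_p(z/\overline{a_n})}{E_p(z/a_n)}.$$ Then for $x\in\mathbb{R}$, $$\left|\int_0^x\frac{f'(t)}{f(t)}\,dt\right|=O(|x|^\rho)\quad\text{as } |x|\to\infty.$$
   Context: The canonical factors are $E_0(z)=1-z$ and, for $p\in\mathbb{N}$, $E_p(z)=(1-z)\exp\!\big(z+z^2/2+\cdots+z^p/p\big)$. *)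

(* Defs.v *)
From Stdlib Require Import Reals List.
From Coquelicot Require Import Coquelicot.
Open Scope R_scope.

Definition cexp (z : C) : C :=
  (exp (Re z) * cos (Im z), exp (Re z) * sin (Im z)).

Fixpoint cpow (z : C) (k : nat) : C :=
  match k with O => 1%C | S k' => (z * cpow z k')%C end.

Fixpoint canon_sum (p : nat) (z : C) : C :=
  match p with
  | O => 0%C
  | S q => (canon_sum q z + cpow z (S q) / RtoC (INR (S q)))%C
  end.

Definition E (p : nat) (z : C) : C := ((1 - z) * cexp (canon_sum p z))%C.

(* Partial product  prod_{n < N} E_p(z / conj a_n) / E_p(z / a_n)  (the sequence a is 0-indexed). *)
Fixpoint partial_prod (p : nat) (a : nat -> C) (N : nat) (z : C) : C :=
  match N with
  | O => 1%C
  | S M => (partial_prod p a M z * (E p (z / Cconj (a M)) / E p (z / a M)))%C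
  end.

(* Main.v *)
Require Import Defs.
From Stdlib Require Import Reals List ZArith Lra Lia FunctionalExtensionality.
From Coquelicot Require Import Coquelicot.
Open Scope R_scope.

Lemma rp_pos x y : 0 < Rpower x y.
Proof. unfold Rpower; apply exp_pos. Qed.

Lemma rp_1_l y : Rpower 1 y = 1.
Proof. unfold Rpower; rewrite ln_1, Rmult_0_r; apply exp_0. Qed.

Lemma rp_le_neg x y e : 0 < x <= y -> e <= 0 -> Rpower y e <= Rpower x e.
Proof.
  intros Hxy He.
  replace e with (- (- e)) by ring.
  rewrite (Rpower_Ropp y (- e)), (Rpower_Ropp x (- e)).
  apply Rinv_le_contravar. apply rp_pos.
  apply Rle_Rpower_l; lra.
Qed.

Lemma tele e y : 0 < y -> exists xi, y < xi < y + 1 /\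
  Rpower (y + 1) e - Rpower y e = e * Rpower xi (e - 1).
Proof.
  intros Hy.
  destruct (MVT_cor2 (fun x => Rpower x e) (fun x => e * Rpower x (e - 1)) y (y+1))
    as [c [Hc1 Hc2]]; [lra| |].
  - intros c Hc. apply derivable_pt_lim_power. lra.
  - exists c. split; [exact Hc2|]. rewrite Hc1. ring.
Qed.

Fixpoint sumN (F : nat -> R) (N : nat) : R :=
  match N with O => 0 | S M => sumN F M + F M end.

Lemma sumN_f_R0 F N : sum_f_R0 F N = sumN F (S N).
Proof. induction N; simpl in *; [ring| rewrite IHN; ring]. Qed.

Lemma sumN_le F G N : (forall n, (n < N)%nat -> F n <= G n) -> sumN F N <= sumN G N.
Proof.
  induction N; intros H; simpl; [lra|].
  assert (sumN F N <= sumN G N) by (apply IHN; intros; apply H; lia).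
  assert (F N <= G N) by (apply H; lia). lra.
Qed.

Lemma sumN_nonneg F N : (forall n, 0 <= F n) -> 0 <= sumN F N.
Proof. intros H; induction N; simpl; [lra|]. specialize (H N); lra. Qed.

Lemma sumN_scal c F N : sumN (fun n => c * F n) N = c * sumN F N.
Proof. induction N; simpl; [ring|]. rewrite IHN; ring. Qed.

Lemma sumN_plus F G N : sumN (fun n => F n + G n) N = sumN F N + sumN G N.
Proof. induction N; simpl; [ring|]. rewrite IHN; ring. Qed.

Lemma sumN_abs F N : Rabs (sumN F N) <= sumN (fun n => Rabs (F n)) N.
Proof.
  induction N; simpl. rewrite Rabs_R0; lra.
  eapply Rle_trans. apply Rabs_triang. lra.
Qed.

Lemma L1 sig : 0 <= sig < 1 -> forall N, (1 <= N)%nat ->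
  sumN (fun n => Rpower (INR n + 1) (- sig)) N <= Rpower (INR N) (1 - sig) / (1 - sig).
Proof.
  intros Hs N HN. induction N as [|N IH]; [lia|].
  destruct (Nat.eq_dec N 0) as [->|HN0].
  - simpl sumN. replace (INR 0 + 1) with 1 by (simpl; ring).
    replace (INR 1) with 1 by reflexivity. rewrite !rp_1_l.
    apply Rmult_le_reg_r with (1 - sig); [lra|].
    unfold Rdiv; rewrite Rmult_assoc, Rinv_l by lra. 
    replace (0+1) with 1 by ring. rewrite rp_1_l. lra.
  - simpl sumN. eapply Rle_trans. apply Rplus_le_compat_r. apply IH; lia.
    assert (Hy : 0 < INR N) by (apply lt_0_INR; lia).
    destruct (tele (1 - sig) (INR N) Hy) as [xi [Hxi Heq]].
    rewrite S_INR.
    assert (Rpower (INR N + 1) (- sig) <= Rpower xi (1 - sig - 1)).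
    { replace (1 - sig - 1) with (- sig) by ring. apply rp_le_neg; lra. }
    apply Rmult_le_reg_r with (1 - sig); [lra|].
    unfold Rdiv. rewrite Rmult_plus_distr_r, !Rmult_assoc, Rinv_l by lra.
    nra.
Qed.

Lemma L2 s : 1 < s -> forall N, (1 <= N)%nat -> forall M,
  sumN (fun k => Rpower (INR (N + k) + 1) (- s)) M <= Rpower (INR N) (1 - s) / (s - 1).
Proof.
  intros Hs N HN.
  assert (H : forall M, sumN (fun k => Rpower (INR (N + k) + 1) (- s)) M
     <= (Rpower (INR N) (1 - s) - Rpower (INR (N + M)) (1 - s)) / (s - 1)).
  { induction M as [|M IH].
    - simpl. rewrite Nat.add_0_r. unfold Rdiv. rewrite Rminus_diag, Rmult_0_l. lra.
    - simpl sumN. eapply Rle_trans. apply Rplus_le_compat_r. apply IH.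
      assert (Hy : 0 < INR (N + M)) by (apply lt_0_INR; lia).
      destruct (tele (1 - s) (INR (N + M)) Hy) as [xi [Hxi Heq]].
      replace (INR (N + S M)) with (INR (N + M) + 1) by (rewrite <- S_INR; f_equal; lia).
      assert (Rpower (INR (N + M) + 1) (- s) <= Rpower xi (1 - s - 1)).
      { replace (1 - s - 1) with (- s) by ring. apply rp_le_neg; lra. }
      apply Rmult_le_reg_r with (s - 1); [lra|].
      unfold Rdiv. rewrite Rmult_plus_distr_r, !Rmult_assoc, Rinv_l by lra.
      nra. }
  intros M. eapply Rle_trans. apply H.
  unfold Rdiv. apply Rmult_le_compat_r. left; apply Rinv_0_lt_compat; lra.
  pose proof (rp_pos (INR (N + M)) (1 - s)). lra.
Qed.

Lemma cpow_mult z w k : cpow (z * w) k = (cpow z k * cpow w k)%C.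
Proof. induction k; simpl. ring. rewrite IHk. ring. Qed.

Lemma cpow_RtoC t k : cpow (RtoC t) k = RtoC (t ^ k).
Proof. induction k; simpl. reflexivity. rewrite IHk, RtoC_mult. reflexivity. Qed.

Lemma conj_RtoC r : Cconj (RtoC r) = RtoC r.
Proof. unfold Cconj, RtoC; simpl. f_equal; ring. Qed.

Lemma cpow_conj z k : cpow (Cconj z) k = Cconj (cpow z k).
Proof. induction k; simpl. apply eq_sym, conj_RtoC. rewrite IHk, Cmult_conj. reflexivity. Qed.

Lemma INR_S_neq0 k : RtoC (INR (S k)) <> 0%C.
Proof. intros H. apply RtoC_inj in H. pose proof (lt_0_INR (S k) ltac:(lia)). lra. Qed.

Lemma canon_sum_conj p z : canon_sum p (Cconj z) = Cconj (canon_sum p z).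
Proof.
  induction p. simpl. apply eq_sym, (conj_RtoC 0).
  cbn [canon_sum]. rewrite IHp, Cplus_conj, Cdiv_conj by apply INR_S_neq0.
  rewrite conj_RtoC, cpow_conj. reflexivity.
Qed.

Definition cc (a : C) (k : nat) : R := Im (cpow (/ a) k).

Fixpoint sp (p : nat) (a : C) (t : R) : R :=
  match p with O => 0 | S q => sp q a t + t ^ (S q) * cc a (S q) / INR (S q) end.

Fixpoint dsp (p : nat) (a : C) (t : R) : R :=
  match p with O => 0 | S q => dsp q a t + t ^ q * cc a (S q) end.

Definition gam (p : nat) (a : C) (t : R) : R :=
  2 * (atan ((Re a - t) / Im a) - atan (Re a / Im a)) - 2 * sp p a t.

Definition dgam (p : nat) (a : C) (t : R) : R :=
  -2 * Im a / ((Re a - t) ^ 2 + Im a ^ 2) - 2 * dsp p a t.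

Lemma Im_RtoC_mult r z : Im (RtoC r * z) = r * Im z.
Proof. destruct z; simpl. ring. Qed.

Lemma Im_div_RtoC z r : r <> 0 -> Im (z / RtoC r) = Im z / r.
Proof. intros Hr. destruct z; unfold Cdiv, Cinv, Cmult; simpl. field. auto. Qed.

Lemma Im_canon_sum p a t : Im (canon_sum p (RtoC t / a)) = sp p a t.
Proof.
  induction p. reflexivity.
  cbn [canon_sum sp]. rewrite <- IHp.
  change (cpow (RtoC t / a) (S p)) with (cpow (RtoC t * / a) (S p)).
  rewrite cpow_mult, cpow_RtoC, im_plus.
  rewrite Im_div_RtoC. rewrite Im_RtoC_mult. unfold cc. reflexivity.
  pose proof (lt_0_INR (S p) ltac:(lia)). lra.
Qed.

Lemma Cdiv_eq (v w Z : C) : w <> 0%C -> (Z * w = v)%C -> (v / w = Z)%C.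
Proof. intros Hw H. subst v. field. exact Hw. Qed.

Lemma unit_mult A B : ((cos A, sin A) * (cos B, sin B))%C = (cos (A + B), sin (A + B)).
Proof. unfold Cmult; simpl. rewrite cos_plus, sin_plus. f_equal; ring. Qed.

Lemma cexp_neq0 z : cexp z <> 0%C.
Proof.
  unfold cexp. intros H. injection H as H1 H2.
  pose proof (exp_pos (Re z)).
  apply Rmult_integral in H1; apply Rmult_integral in H2.
  pose proof (sin2_cos2 (Im z)). unfold Rsqr in H0.
  destruct H1 as [H1|H1]; [lra|]; destruct H2 as [H2|H2]; [lra|].
  rewrite H1, H2 in H0. lra.
Qed.

Lemma cexp_conj_div S : (cexp (Cconj S) / cexp S = (cos (-2 * Im S), sin (-2 * Im S)))%C.
Proof.
  apply Cdiv_eq. apply cexp_neq0.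
  destruct S as [x y]. unfold cexp, Cconj, Cmult; simpl.
  replace (-2*y) with (- y + - y) by ring.
  rewrite cos_plus, sin_plus, cos_neg, sin_neg.
  pose proof (sin2_cos2 y) as Hs; unfold Rsqr in Hs.
  f_equal; [transitivity ((exp x * cos y) * (sin y * sin y + cos y * cos y)) | transitivity ((exp x * - sin y) * (sin y * sin y + cos y * cos y))]; try ring; rewrite Hs; ring.
Qed.

Lemma cs_atan2 u v :
  cos (2 * (atan u - atan v)) = ((1 + u * v) ^ 2 - (u - v) ^ 2) / ((1 + u ^ 2) * (1 + v ^ 2)) /\
  sin (2 * (atan u - atan v)) = 2 * (1 + u * v) * (u - v) / ((1 + u ^ 2) * (1 + v ^ 2)).
Proof.
  rewrite cos_2a, sin_2a, cos_minus, sin_minus, !cos_atan, !sin_atan.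
  assert (Hu : 0 < 1 + u²) by (pose proof (Rle_0_sqr u); lra).
  assert (Hv : 0 < 1 + v²) by (pose proof (Rle_0_sqr v); lra).
  pose proof (sqrt_lt_R0 _ Hu) as HA. pose proof (sqrt_lt_R0 _ Hv) as HB.
  pose proof (sqrt_sqrt _ (Rlt_le _ _ Hu)) as EA.
  pose proof (sqrt_sqrt _ (Rlt_le _ _ Hv)) as EB.
  set (A := sqrt (1 + u²)) in *. set (B := sqrt (1 + v²)) in *.
  unfold Rsqr in *.
  replace (1 + u ^ 2) with (A * A) by (rewrite EA; ring).
  replace (1 + v ^ 2) with (B * B) by (rewrite EB; ring).
  split; field; lra.
Qed.

Lemma phase1 (a : C) t : 0 < Im a ->
  ((1 - RtoC t / Cconj a) / (1 - RtoC t / a) =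
   (cos (2 * (atan ((Re a - t) / Im a) - atan (Re a / Im a))),
    sin (2 * (atan ((Re a - t) / Im a) - atan (Re a / Im a)))))%C.
Proof.
  intros Hb. apply Cdiv_eq.
  - intros H. assert (Ha : a <> 0%C) by (intros ->; simpl in Hb; lra).
    assert (E : (a - RtoC t = a * (1 - RtoC t / a))%C) by (field; exact Ha).
    rewrite H, Cmult_0_r in E. apply (f_equal Im) in E. simpl in E. unfold Im in Hb. lra.
  - destruct (cs_atan2 ((Re a - t) / Im a) (Re a / Im a)) as [Ec Es].
    rewrite Ec, Es. destruct a as [x y]. simpl in *.
    unfold Cmult, Cminus, Cdiv, Cinv, Cconj, RtoC, Cplus, Copp. simpl.
    assert (0 < x * x + y * y) by nra.
    pose proof (Rle_0_sqr (x - t)); pose proof (Rmult_lt_0_compat _ _ Hb Hb); unfold Rsqr in *.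
    f_equal; field; repeat split; apply Rgt_not_eq; nra.
Qed.

Lemma one_minus_neq0 (a : C) t : 0 < Im a -> (1 - RtoC t / a)%C <> 0%C.
Proof.
  intros Hb H. assert (Ha : a <> 0%C) by (intros ->; simpl in Hb; lra).
  assert (E : (a - RtoC t = a * (1 - RtoC t / a))%C) by (field; exact Ha).
  rewrite H, Cmult_0_r in E. apply (f_equal Im) in E. simpl in E. unfold Im in Hb. lra.
Qed.

Lemma factor_eq p (a : C) t : 0 < Im a ->
  (E p (RtoC t / Cconj a) / E p (RtoC t / a) = (cos (gam p a t), sin (gam p a t)))%C.
Proof.
  intros Hb. assert (Ha : a <> 0%C) by (intros ->; simpl in Hb; lra).
  assert (Hw : (RtoC t / Cconj a = Cconj (RtoC t / a))%C).
  { rewrite Cdiv_conj by exact Ha. rewrite conj_RtoC. reflexivity. }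
  unfold E. replace (canon_sum p (RtoC t / Cconj a)) with (Cconj (canon_sum p (RtoC t / a))) by (rewrite Hw, canon_sum_conj; reflexivity).
  pose proof (one_minus_neq0 a t Hb) as H1.
  pose proof (cexp_neq0 (canon_sum p (RtoC t / a))) as H2.
  transitivity (((1 - RtoC t / Cconj a) / (1 - RtoC t / a)) *
     (cexp (Cconj (canon_sum p (RtoC t / a))) / cexp (canon_sum p (RtoC t / a))))%C.
  { field. unfold Im in Hb. repeat split; try assumption; intros H; apply (f_equal snd) in H; simpl in H; lra. }
  rewrite phase1 by exact Hb. rewrite cexp_conj_div, unit_mult.
  rewrite Im_canon_sum. unfold gam. f_equal; f_equal; ring.
Qed.

Lemma dpl_ext f g x l : (forall y, f y = g y) -> derivable_pt_lim f x l -> derivable_pt_lim g x l.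
Proof.
  intros H D. replace g with f; auto.
  apply functional_extensionality; auto.
Qed.

Lemma dpl_eq f x l l' : l = l' -> derivable_pt_lim f x l -> derivable_pt_lim f x l'.
Proof. intros ->; auto. Qed.

Lemma dpl_scal_r f c x l : derivable_pt_lim f x l -> derivable_pt_lim (fun y => f y * c) x (l * c).
Proof.
  intros D. apply (dpl_eq _ _ (c * l)); [ring|].
  apply (dpl_ext (mult_real_fct c f)). intros; unfold mult_real_fct; ring.
  apply derivable_pt_lim_scal; auto.
Qed.

Lemma dpl_plus f g x l1 l2 : derivable_pt_lim f x l1 -> derivable_pt_lim g x l2 ->
  derivable_pt_lim (fun y => f y + g y) x (l1 + l2).
Proof. intros. apply (derivable_pt_lim_plus f g); auto. Qed.

Lemma dpl_minus f g x l1 l2 : derivable_pt_lim f x l1 -> derivable_pt_lim g x l2 ->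
  derivable_pt_lim (fun y => f y - g y) x (l1 - l2).
Proof. intros. apply (derivable_pt_lim_minus f g); auto. Qed.

Lemma dpl_const c x : derivable_pt_lim (fun _ => c) x 0.
Proof. apply (derivable_pt_lim_const c). Qed.

Lemma dpl_comp f g x l1 l2 : derivable_pt_lim f x l1 -> derivable_pt_lim g (f x) l2 ->
  derivable_pt_lim (fun y => g (f y)) x (l2 * l1).
Proof. intros. apply (derivable_pt_lim_comp f g); auto. Qed.

Lemma d_sp p a t : derivable_pt_lim (fun s => sp p a s) t (dsp p a t).
Proof.
  induction p; cbn [sp dsp].
  - apply dpl_const.
  - apply (dpl_eq _ _ (dsp p a t + (INR (S p) * t ^ Nat.pred (S p) * (cc a (S p) / INR (S p))))).
    { simpl Nat.pred. field. apply not_0_INR; lia. }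
    apply (dpl_ext (fun s => sp p a s + s ^ S p * (cc a (S p) / INR (S p)))).
    { intros y. field. apply not_0_INR; lia. }
    apply dpl_plus. exact IHp.
    apply dpl_scal_r. apply derivable_pt_lim_pow.
Qed.

Lemma d_gam p (a : C) t : 0 < Im a -> derivable_pt_lim (gam p a) t (dgam p a t).
Proof.
  intros Hb. unfold gam, dgam.
  apply (dpl_eq _ _ (2 * (/ (1 + ((Re a - t) / Im a) ^ 2) * ((0 - 1) * / Im a) - 0) - 2 * dsp p a t)).
  { pose proof (Rle_0_sqr (Re a - t)). unfold Rsqr in H. field. split; [|lra]. apply Rgt_not_eq. pose proof (Rmult_lt_0_compat _ _ Hb Hb). nra. }
  apply (dpl_ext (fun s => (fun y => 2 * y) (atan ((Re a - s) / Im a) - atan (Re a / Im a)) - (fun y => 2 * y) (sp p a s))).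
  { intros; reflexivity. }
  apply dpl_minus.
  - apply (dpl_eq _ _ (2 * (/ (1 + ((Re a - t) / Im a) ^ 2) * ((0 - 1) * / Im a) - 0))). ring.
    apply (dpl_ext (fun y => (atan ((Re a - y) / Im a) - atan (Re a / Im a)) * 2)). intros; ring.
    apply (dpl_eq _ _ ((/ (1 + ((Re a - t) / Im a) ^ 2) * ((0 - 1) * / Im a) - 0) * 2)). ring.
    apply dpl_scal_r. apply dpl_minus; [|apply dpl_const].
    apply (dpl_comp (fun y => (Re a - y) / Im a) atan).
    + apply (dpl_scal_r (fun y => Re a - y)). apply dpl_minus. apply dpl_const. apply derivable_pt_lim_id.
    + apply derivable_pt_lim_atan.
  - apply (dpl_eq _ _ (dsp p a t * 2)). ring.
    apply (dpl_ext (fun y => sp p a y * 2)). intros; ring.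
    apply dpl_scal_r. apply d_sp.
Qed.

Fixpoint csum (p : nat) (a : C) (t : R) : C :=
  match p with O => 0%C | S q => (csum q a t + RtoC (t ^ q) * cpow (/ a) (S q))%C end.

Lemma Im_csum p a t : Im (csum p a t) = dsp p a t.
Proof. induction p; cbn [csum dsp]. reflexivity. rewrite im_plus, Im_RtoC_mult, IHp. reflexivity. Qed.

Lemma a_minus_t_neq0 (a : C) t : 0 < Im a -> (a - RtoC t)%C <> 0%C.
Proof. intros Hb H. apply (f_equal snd) in H. simpl in H. unfold Im in Hb. lra. Qed.

Lemma a_neq0 (a : C) : 0 < Im a -> a <> 0%C.
Proof. intros Hb H. subst. simpl in Hb. lra. Qed.

Lemma geom_id p (a : C) t : 0 < Im a ->
  (/ (a - RtoC t) = csum p a t + RtoC (t ^ p) * cpow (/ a) p / (a - RtoC t))%C.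
Proof.
  intros Hb. pose proof (a_minus_t_neq0 a t Hb). pose proof (a_neq0 a Hb).
  induction p; cbn [csum cpow].
  - simpl. field. auto.
  - rewrite IHp. rewrite <- Cplus_assoc. f_equal.
    change (t ^ S p) with (t * t ^ p). rewrite RtoC_mult.
    field. auto.
Qed.

Lemma Cmod_cpow z k : Cmod (cpow z k) = Cmod z ^ k.
Proof. induction k; simpl. apply Cmod_1. rewrite Cmod_mult, IHk. reflexivity. Qed.

Lemma Im_inv_a_t (a : C) t : Im (/ (a - RtoC t)) = - Im a / ((Re a - t) ^ 2 + Im a ^ 2).
Proof. destruct a as [x y]. unfold Cinv, Cminus, Cplus, Copp, RtoC. simpl. rewrite Ropp_0, Rplus_0_r. unfold Rminus. reflexivity. Qed.

Lemma Cmod_ge_Im z : Rabs (Im z) <= Cmod z.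
Proof.
  destruct z as [x y]. unfold Cmod; simpl.
  rewrite <- sqrt_Rsqr_abs. apply sqrt_le_1_alt. unfold Rsqr. pose proof (pow2_ge_0 x). nra.
Qed.

Lemma dgam_bound p (a : C) t : 0 < Im a ->
  Rabs (dgam p a t) <= 2 * Rabs t ^ p / (Cmod a ^ p * Cmod (a - RtoC t)).
Proof.
  intros Hb.
  assert (E : dgam p a t = 2 * Im (RtoC (t ^ p) * cpow (/ a) p / (a - RtoC t))).
  { assert (G := f_equal Im (geom_id p a t Hb)). rewrite im_plus, Im_csum, Im_inv_a_t in G.
    unfold dgam. lra. }
  rewrite E, Rabs_mult, Rabs_right by lra.
  unfold Rdiv. rewrite Rmult_assoc. apply Rmult_le_compat_l; [lra|].
  eapply Rle_trans. apply Cmod_ge_Im.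
  pose proof (a_minus_t_neq0 a t Hb). pose proof (a_neq0 a Hb).
  unfold Cdiv. rewrite !Cmod_mult, Cmod_inv by auto. rewrite Cmod_cpow, Cmod_inv by auto.
  rewrite Cmod_R, <- RPow_abs, pow_inv.
  assert (0 < Cmod a) by (apply Cmod_gt_0; auto).
  assert (0 < Cmod (a - RtoC t)) by (apply Cmod_gt_0; auto).
  apply Req_le. field. split. lra. apply pow_nonzero. lra.
Qed.

Lemma cc_bound (a : C) k : 0 < Im a -> Rabs (cc a k) <= / Cmod a ^ k.
Proof.
  intros Hb. unfold cc. eapply Rle_trans. apply Cmod_ge_Im.
  rewrite Cmod_cpow, Cmod_inv by (apply a_neq0; auto). rewrite pow_inv. lra.
Qed.

Lemma sp_bound p (a : C) t : 0 < Im a ->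
  Rabs (sp p a t) <= sumN (fun k => (Rabs t / Cmod a) ^ S k) p.
Proof.
  intros Hb. assert (0 < Cmod a) by (apply Cmod_gt_0, a_neq0; auto).
  induction p; cbn [sp sumN]. rewrite Rabs_R0; lra.
  eapply Rle_trans. apply Rabs_triang. apply Rplus_le_compat. exact IHp.
  unfold Rdiv. rewrite !Rabs_mult, Rabs_inv, <- RPow_abs.
  rewrite Rpow_mult_distr, pow_inv.
  assert (1 <= INR (S p)) by (apply (le_INR 1); lia).
  rewrite (Rabs_right (INR (S p))) by lra.
  pose proof (cc_bound a (S p) Hb).
  assert (0 < Rabs t ^ S p \/ Rabs t ^ S p = 0) as [Ht|Ht].
  { pose proof (pow_le (Rabs t) (S p) (Rabs_pos t)). lra. }
  - rewrite Rmult_assoc. apply Rmult_le_compat_l; [lra|].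
    apply Rle_trans with (Rabs (cc a (S p)) * 1).
    + apply Rmult_le_compat_l. apply Rabs_pos. rewrite <- Rinv_1. apply Rinv_le_contravar; lra.
    + lra.
  - rewrite Ht. lra.
Qed.

Lemma atan_diff_bound x y : Rabs (atan x - atan y) <= PI.
Proof. pose proof (atan_bound x). pose proof (atan_bound y). apply Rabs_le. lra. Qed.

Lemma gam_bound_big p (a : C) t : 0 < Im a ->
  Rabs (gam p a t) <= 2 * PI + 2 * sumN (fun k => (Rabs t / Cmod a) ^ S k) p.
Proof.
  intros Hb. unfold gam. eapply Rle_trans. apply Rabs_triang. rewrite Rabs_Ropp.
  rewrite !Rabs_mult, Rabs_right by lra.
  pose proof (atan_diff_bound ((Re a - t) / Im a) (Re a / Im a)).
  pose proof (sp_bound p a t Hb). lra.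
Qed.

Lemma gam_0 p (a : C) : gam p a 0 = 0.
Proof.
  unfold gam. replace (Re a - 0) with (Re a) by ring.
  assert (sp p a 0 = 0).
  { induction p; cbn [sp]. auto. rewrite IHp. simpl. unfold Rdiv. ring. }
  rewrite H. ring.
Qed.

Lemma gam_bound_small p (a : C) x : 0 < Im a -> Rabs x <= Cmod a / 2 ->
  Rabs (gam p a x) <= 4 * (Rabs x / Cmod a) ^ S p.
Proof.
  intros Hb Hx. assert (Ha : 0 < Cmod a) by (apply Cmod_gt_0, a_neq0; auto).
  assert (Hd : forall c, Rabs c <= Rabs x -> Rabs (dgam p a c) <= 4 * Rabs x ^ p / Cmod a ^ S p).
  { intros c Hc. eapply Rle_trans. apply dgam_bound; auto.
    assert (Cmod a - Rabs c <= Cmod (a - RtoC c)).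
    { pose proof (Cmod_triangle (a - RtoC c) (RtoC c)). rewrite Cmod_R in H.
      replace (a - RtoC c + RtoC c)%C with a in H by ring. lra. }
    assert (Hp : 0 < Cmod a ^ p) by (apply pow_lt; lra).
    assert (Rabs c ^ p <= Rabs x ^ p) by (apply pow_incr; split; [apply Rabs_pos|auto]).
    simpl pow.
    apply Rle_trans with (2 * Rabs x ^ p / (Cmod a ^ p * (Cmod a / 2))).
    - unfold Rdiv. apply Rmult_le_compat. pose proof (pow_le (Rabs c) p (Rabs_pos c)); lra.
      left; apply Rinv_0_lt_compat. apply Rmult_lt_0_compat; lra. lra.
      apply Rinv_le_contravar. apply Rmult_lt_0_compat; lra.
      apply Rmult_le_compat_l; lra.
    - apply Req_le. field. split; lra. }
  destruct (Rtotal_order x 0) as [Hlt|[Heq|Hgt]].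
  - destruct (MVT_cor2 (gam p a) (dgam p a) x 0 Hlt) as [c [Hc1 Hc2]].
    { intros; apply d_gam; auto. }
    rewrite gam_0 in Hc1.
    assert (gam p a x = - (dgam p a c * (0 - x))) by lra. rewrite H.
    rewrite Rabs_Ropp, Rabs_mult. replace (0 - x) with (Rabs x) by (rewrite Rabs_left; lra).
    assert (Rabs c <= Rabs x) by (rewrite !Rabs_left; lra).
    specialize (Hd c H0). eapply Rle_trans. apply Rmult_le_compat_r. apply Rabs_pos. exact Hd.
    apply Req_le. unfold Rdiv. rewrite Rpow_mult_distr, pow_inv. simpl pow. rewrite Rabs_Rabsolu. field.
    split. apply pow_nonzero; lra. lra.
  - subst. rewrite gam_0, Rabs_R0. unfold Rdiv. rewrite Rmult_0_l, pow_i by lia. lra.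
  - destruct (MVT_cor2 (gam p a) (dgam p a) 0 x Hgt) as [c [Hc1 Hc2]].
    { intros; apply d_gam; auto. }
    rewrite gam_0 in Hc1.
    assert (gam p a x = dgam p a c * (x - 0)) by lra. rewrite H.
    rewrite Rabs_mult. replace (x - 0) with (Rabs x) by (rewrite Rabs_right; lra).
    assert (Rabs c <= Rabs x) by (rewrite !Rabs_right; lra).
    specialize (Hd c H0). eapply Rle_trans. apply Rmult_le_compat_r. apply Rabs_pos. exact Hd.
    apply Req_le. unfold Rdiv. rewrite Rpow_mult_distr, pow_inv. simpl pow. rewrite Rabs_Rabsolu. field.
    split. apply pow_nonzero; lra. lra.
Qed.

Definition Kc (p : nat) : R := (2 * PI + 2 * INR p + 4) * 2 ^ S p.

Lemma sumN_const c N : sumN (fun _ => c) N = INR N * c.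
Proof. induction N; cbn [sumN]. simpl; ring. rewrite IHN, S_INR. ring. Qed.

Lemma gam_bound p (a : C) x : 0 < Im a ->
  Rabs (gam p a x) <= Kc p * (Rabs x / Cmod a) ^ p /\
  Rabs (gam p a x) <= Kc p * (Rabs x / Cmod a) ^ S p.
Proof.
  intros Hb. assert (Ha : 0 < Cmod a) by (apply Cmod_gt_0, a_neq0; auto).
  set (u := Rabs x / Cmod a).
  assert (Hu : 0 <= u) by (unfold u, Rdiv; apply Rmult_le_pos; [apply Rabs_pos| left; apply Rinv_0_lt_compat; lra]).
  pose proof PI_RGT_0. pose proof (pos_INR p).
  assert (H2 : 1 <= 2 ^ S p) by (apply pow_R1_Rle; lra).
  assert (H2' : 2 ^ p <= 2 ^ S p) by (apply Rle_pow; [lra|lia]).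
  assert (HK : 4 <= Kc p) by (unfold Kc; nra).
  pose proof (pow_le u p Hu) as Hup.
  destruct (Rle_lt_dec u (1/2)) as [Hs|Hl].
  - assert (Hx : Rabs x <= Cmod a / 2).
    { unfold u in Hs. apply Rmult_le_reg_r with (/ Cmod a). apply Rinv_0_lt_compat; lra.
      replace (Cmod a / 2 * / Cmod a) with (1/2) by (field; lra). exact Hs. }
    pose proof (gam_bound_small p a x Hb Hx) as G. fold u in G.
    simpl pow in *. split.
    + apply Rle_trans with (1 := G).
      assert (u * u ^ p <= 1/2 * u ^ p) by (apply Rmult_le_compat_r; lra). nra.
    + apply Rle_trans with (1 := G). apply Rmult_le_compat_r. apply Rmult_le_pos; lra. lra.
  - pose proof (gam_bound_big p a x Hb) as G. fold u in G.
    assert (S1 : sumN (fun k => u ^ S k) p <= INR p * (2 * u) ^ p).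
    { rewrite <- sumN_const. apply sumN_le. intros k Hk.
      apply Rle_trans with ((2 * u) ^ S k). apply pow_incr; lra.
      apply Rle_pow; [lra|lia]. }
    assert (O1 : 1 <= (2 * u) ^ p) by (apply pow_R1_Rle; lra).
    rewrite Rpow_mult_distr in S1, O1.
    assert (B : Rabs (gam p a x) <= (2 * PI + 2 * INR p + 4) * (2 ^ p * u ^ p)) by nra.
    split.
    + unfold Kc. apply Rle_trans with (1 := B). rewrite Rmult_assoc.
      apply Rmult_le_compat_l. lra. apply Rmult_le_compat_r; lra.
    + unfold Kc. apply Rle_trans with (1 := B). rewrite Rmult_assoc.
      apply Rmult_le_compat_l. lra. simpl pow. nra.
Qed.

Lemma C_deriv_real (f : C -> C) t l : is_derive f (RtoC t) l ->
  derivable_pt_lim (fun s => Re (f (RtoC s))) t (Re l) /\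
  derivable_pt_lim (fun s => Im (f (RtoC s))) t (Im l).
Proof.
  intros [_ H].
  specialize (H (RtoC t) (fun P HP => HP)).
  assert (K : forall eps, 0 < eps -> exists delta : posreal, forall h, h <> 0 -> Rabs h < delta ->
     Cmod ((f (RtoC (t + h)) - f (RtoC t)) - RtoC h * l)%C <= eps * Rabs h).
  { intros eps Heps. destruct (H (mkposreal eps Heps)) as [d Hd]. exists d.
    intros h Hh0 Hh. specialize (Hd (RtoC (t + h))).
    assert (Em : minus (RtoC (t + h)) (RtoC t) = RtoC h).
    { unfold minus, plus, opp; simpl. unfold RtoC, Cplus, Copp; simpl. f_equal; ring. }
    assert (B : @ball (AbsRing_UniformSpace C_AbsRing) (RtoC t) d (RtoC (t + h))).
    { unfold ball; simpl; unfold AbsRing_ball; simpl. unfold abs, minus, plus, opp; simpl.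
      replace (RtoC (t + h) + - RtoC t)%C with (RtoC h). rewrite Cmod_R. exact Hh.
      }
    specialize (Hd B). unfold norm, minus, plus, opp, scal in Hd; simpl in Hd.
    replace (RtoC (t + h) + - RtoC t)%C with (RtoC h) in Hd by (unfold RtoC, Cplus, Copp; simpl; f_equal; ring).
    unfold abs, mult in Hd; simpl in Hd. rewrite Cmod_R in Hd. exact Hd. }
  split.
  - intros eps Heps. destruct (K (eps / 2)) as [d Hd]. lra. exists d. intros h Hh0 Hh.
    specialize (Hd h Hh0 Hh).
    assert (E : (Re (f (RtoC (t + h))) - Re (f (RtoC t))) / h - Re l = Re (f (RtoC (t + h)) - f (RtoC t) - RtoC h * l)%C / h).
    { unfold Re, Im; simpl. field. auto. }
    rewrite E. unfold Rdiv. rewrite Rabs_mult, Rabs_inv.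
    assert (0 < Rabs h) by (apply Rabs_pos_lt; auto).
    apply Rle_lt_trans with (eps / 2 * Rabs h * / Rabs h).
    apply Rmult_le_compat_r. left; apply Rinv_0_lt_compat; auto.
    eapply Rle_trans. apply re_le_Cmod. exact Hd.
    replace (eps / 2 * Rabs h * / Rabs h) with (eps / 2) by (field; lra). lra.
  - intros eps Heps. destruct (K (eps / 2)) as [d Hd]. lra. exists d. intros h Hh0 Hh.
    specialize (Hd h Hh0 Hh).
    assert (E : (Im (f (RtoC (t + h))) - Im (f (RtoC t))) / h - Im l = Im (f (RtoC (t + h)) - f (RtoC t) - RtoC h * l)%C / h).
    { unfold Re, Im; simpl. field. auto. }
    rewrite E. unfold Rdiv. rewrite Rabs_mult, Rabs_inv.
    assert (0 < Rabs h) by (apply Rabs_pos_lt; auto).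
    apply Rle_lt_trans with (eps / 2 * Rabs h * / Rabs h).
    apply Rmult_le_compat_r. left; apply Rinv_0_lt_compat; auto.
    eapply Rle_trans. apply Cmod_ge_Im. exact Hd.
    replace (eps / 2 * Rabs h * / Rabs h) with (eps / 2) by (field; lra). lra.
Qed.

Lemma sumN_shift F M : sumN F (S M) = F 0%nat + sumN (fun k => F (S k)) M.
Proof. induction M; cbn [sumN] in *. ring. rewrite IHM. ring. Qed.

Lemma sumN_split F N M : sumN F (N + M) = sumN F N + sumN (fun k => F (N + k)%nat) M.
Proof. induction M; cbn [sumN]. rewrite Nat.add_0_r; ring. rewrite Nat.add_succ_r. cbn [sumN]. rewrite IHM. ring. Qed.

Lemma sumN_mono F N M : (forall n, 0 <= F n) -> (N <= M)%nat -> sumN F N <= sumN F M.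
Proof.
  intros H HNM. replace M with (N + (M - N))%nat by lia. rewrite sumN_split.
  pose proof (sumN_nonneg (fun k => F (N + k)%nat) (M - N) (fun k => H _)). lra.
Qed.

Lemma abs_conv F B : (forall M, sumN (fun n => Rabs (F n)) M <= B) ->
  {l | Un_cv (fun N => sum_f_R0 F N) l}.
Proof.
  intros H. apply cv_cauchy_2, cauchy_abs, cv_cauchy_1.
  apply growing_cv.
  - intros n. simpl. pose proof (Rabs_pos (F (S n))). lra.
  - exists B. intros x [i ->]. rewrite sumN_f_R0. apply H.
Qed.

Lemma lim_bound F l B : Un_cv (fun N => sum_f_R0 F N) l ->
  (forall M, sumN (fun n => Rabs (F n)) M <= B) -> Rabs l <= B.
Proof.
  intros Hl H. apply Rnot_lt_le. intros Hc.
  destruct (Hl (Rabs l - B)) as [N HN]. lra.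
  specialize (HN N (Nat.le_refl N)). unfold Rdist in HN.
  pose proof (sumN_abs F (S N)). rewrite <- sumN_f_R0 in H0. specialize (H (S N)).
  pose proof (Rabs_triang_inv l (sum_f_R0 F N)).
  rewrite Rabs_minus_sym in HN. lra.
Qed.

Lemma sum_s_bound s : 1 < s -> forall M,
  sumN (fun n => Rpower (INR n + 1) (- s)) M <= 1 + 1 / (s - 1).
Proof.
  intros Hs M. destruct M. simpl. assert (0 < 1/(s-1)) by (apply Rdiv_lt_0_compat; lra). lra.
  rewrite sumN_shift. replace (INR 0 + 1) with 1 by (simpl; ring). rewrite rp_1_l.
  pose proof (L2 s Hs 1%nat (Nat.le_refl 1) M).
  replace (INR 1) with 1 in H by reflexivity. rewrite rp_1_l in H.
  apply Rplus_le_compat_l. eapply Rle_trans; [|exact H].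
  apply Req_le. f_equal.
Qed.

Lemma lower_bound (a : nat -> C) (C0 rho : R) :
  0 < rho -> (forall j, 0 < Im (a j)) ->
  (forall j, Cmod (a j) <= Cmod (a (S j))) ->
  (forall r : R, 1 <= r ->
     forall l : list nat, NoDup l -> List.Forall (fun j => Cmod (a j) <= r) l ->
       INR (length l) <= C0 * Rpower r rho) ->
  exists c, 0 < c /\ forall n, c * Rpower (INR n + 1) (/ rho) <= Cmod (a n).
Proof.
  intros Hrho Hup Hsort Hcount.
  assert (Hle : forall i j, (i <= j)%nat -> Cmod (a i) <= Cmod (a j)).
  { intros i j Hij. induction Hij. lra. specialize (Hsort m). lra. }
  assert (Hc : forall n, INR (S n) <= C0 * Rpower (Rmax 1 (Cmod (a n))) rho).
  { intros n. replace (S n) with (length (seq 0 (S n))) by apply length_seq.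
    apply Hcount. apply Rmax_l. apply seq_NoDup.
    apply Forall_forall. intros j Hj. apply in_seq in Hj.
    eapply Rle_trans. apply Hle. instantiate (1 := n). lia. apply Rmax_r. }
  assert (HC0 : 0 < C0).
  { specialize (Hc 0%nat). simpl in Hc. pose proof (rp_pos (Rmax 1 (Cmod (a 0%nat))) rho).
    destruct (Rle_lt_dec C0 0); [|auto]. nra. }
  assert (Ha0 : 0 < Cmod (a 0%nat)) by (apply Cmod_gt_0, a_neq0; auto).
  set (m0 := Rmin 1 (Cmod (a 0%nat))).
  assert (Hm0 : 0 < m0) by (unfold m0; apply Rmin_glb_lt; lra).
  set (K := Rpower C0 (/ rho)).
  assert (HK : 0 < K) by apply rp_pos.
  exists (m0 / K). split. apply Rdiv_lt_0_compat; auto.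
  intros n. set (r := Rmax 1 (Cmod (a n))).
  assert (Hr : 1 <= r) by apply Rmax_l.
  assert (H1 : Rpower (INR n + 1) (/ rho) <= K * r).
  { replace (INR n + 1) with (INR (S n)) by (rewrite S_INR; ring).
    eapply Rle_trans. apply Rle_Rpower_l. left; apply Rinv_0_lt_compat; auto.
    split. apply lt_0_INR; lia. apply Hc.
    rewrite <- Rpower_mult_distr by (auto || apply rp_pos).
    rewrite Rpower_mult. rewrite Rinv_r by lra. rewrite Rpower_1 by (apply Rlt_le_trans with 1; [lra | apply Rmax_l]). fold K r. lra. }
  assert (H2 : m0 * r <= Cmod (a n)).
  { unfold r, m0. destruct (Rle_lt_dec 1 (Cmod (a n))).
    - rewrite Rmax_right by lra. pose proof (Rmin_l 1 (Cmod (a 0%nat))). nra.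
    - rewrite Rmax_left by lra. rewrite Rmult_1_r. eapply Rle_trans. apply Rmin_r. apply Hle. lia. }
  apply Rle_trans with (m0 / K * (K * r)).
  apply Rmult_le_compat_l. left; apply Rdiv_lt_0_compat; auto. exact H1.
  replace (m0 / K * (K * r)) with (m0 * r) by (field; lra). exact H2.
Qed.

Lemma pow_rp z e k : 0 < z -> (Rpower z e) ^ k = Rpower z (- (INR k * - e)).
Proof.
  intros Hz. rewrite <- Rpower_pow by apply rp_pos. rewrite Rpower_mult. f_equal. ring.
Qed.

Lemma u_pow_bound (A : C) c rho n x k : 0 < c -> 0 < rho -> 0 < Cmod A ->
  c * Rpower (INR n + 1) (/ rho) <= Cmod A ->
  (Rabs x / Cmod A) ^ k <= (Rabs x / c) ^ k * Rpower (INR n + 1) (- (INR k / rho)).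
Proof.
  intros Hc Hrho HA Hlow.
  assert (Hw : 0 < Rpower (INR n + 1) (/ rho)) by apply rp_pos.
  assert (Hn : 0 < INR n + 1) by (pose proof (pos_INR n); lra).
  replace (Rpower (INR n + 1) (- (INR k / rho))) with (Rpower (INR n + 1) (- / rho) ^ k).
  2:{ rewrite pow_rp by lra. f_equal. field. lra. }
  rewrite <- Rpow_mult_distr. apply pow_incr. split.
  - unfold Rdiv. apply Rmult_le_pos. apply Rabs_pos. left; apply Rinv_0_lt_compat; lra.
  - rewrite Rpower_Ropp. unfold Rdiv. rewrite Rmult_assoc. apply Rmult_le_compat_l. apply Rabs_pos.
    rewrite <- Rinv_mult. apply Rinv_le_contravar. nra. lra.
Qed.

Lemma up_nat X : 0 < X -> X < INR (Z.to_nat (up X)) /\ INR (Z.to_nat (up X)) <= X + 1.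
Proof.
  intros HX. destruct (archimed X) as [H1 H2].
  assert (0 <= up X)%Z. { apply le_IZR. lra. }
  rewrite INR_IZR_INZ, Z2Nat.id by auto. lra.
Qed.

Lemma gam_sum_bound p (a : nat -> C) c rho t :
  0 < c -> 0 < rho -> rho < INR (S p) -> (forall j, 0 < Im (a j)) ->
  (forall n, c * Rpower (INR n + 1) (/ rho) <= Cmod (a n)) ->
  forall M, sumN (fun n => Rabs (gam p (a n) t)) M <=
    Kc p * (Rabs t / c) ^ S p * (1 + 1 / (INR (S p) / rho - 1)).
Proof.
  intros Hc Hrho Hrp Hup Hlow M.
  assert (Hs : 1 < INR (S p) / rho).
  { apply Rmult_lt_reg_r with rho; auto. unfold Rdiv. rewrite Rmult_assoc, Rinv_l; lra. }
  assert (HK : 0 <= Kc p * (Rabs t / c) ^ S p).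
  { apply Rmult_le_pos. unfold Kc. pose proof PI_RGT_0. pose proof (pos_INR p).
    apply Rmult_le_pos. lra. apply pow_le; lra. apply pow_le.
    unfold Rdiv; apply Rmult_le_pos. apply Rabs_pos. left; apply Rinv_0_lt_compat; auto. }
  eapply Rle_trans with (sumN (fun n => Kc p * (Rabs t / c) ^ S p * Rpower (INR n + 1) (- (INR (S p) / rho))) M).
  - apply sumN_le. intros n _.
    assert (HA : 0 < Cmod (a n)) by (apply Cmod_gt_0, a_neq0; auto).
    destruct (gam_bound p (a n) t (Hup n)) as [_ G].
    eapply Rle_trans. exact G. rewrite Rmult_assoc. apply Rmult_le_compat_l.
    unfold Kc. pose proof PI_RGT_0. pose proof (pos_INR p). apply Rmult_le_pos. lra. apply pow_le; lra.
    apply u_pow_bound; auto.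
  - rewrite sumN_scal. apply Rmult_le_compat_l. auto. apply sum_s_bound. auto.
Qed.

Definition N0T (c rho T : R) : nat := Z.to_nat (up (Rpower (2 * T / c) rho)).

Definition AnT p (a : nat -> C) c rho T (n : nat) : R :=
  (if lt_dec n (N0T c rho T) then 2 * T ^ p / (Cmod (a n) ^ p * Im (a n)) else 0)
  + 4 * T ^ p * (Rabs 1 / c) ^ S p * Rpower (INR n + 1) (- (INR (S p) / rho)).

Lemma AnT_nonneg p a c rho T n : 0 < c -> 0 < T -> (forall j, 0 < Im (a j)) -> 0 <= AnT p a c rho T n.
Proof.
  intros Hc HT Hup. unfold AnT.
  assert (HA : 0 < Cmod (a n)) by (apply Cmod_gt_0, a_neq0; auto).
  apply Rplus_le_le_0_compat.
  - destruct lt_dec. apply Rlt_le, Rdiv_lt_0_compat. apply Rmult_lt_0_compat. lra. apply pow_lt; lra.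
    apply Rmult_lt_0_compat. apply pow_lt; lra. auto. lra.
  - apply Rmult_le_pos. apply Rmult_le_pos. apply Rmult_le_pos. lra. apply pow_le; lra.
    apply pow_le. unfold Rdiv. apply Rmult_le_pos. apply Rabs_pos. left; apply Rinv_0_lt_compat; auto.
    left; apply rp_pos.
Qed.

Lemma AnT_bound p a c rho T n y : 0 < c -> 0 < rho -> 0 < T -> (forall j, 0 < Im (a j)) ->
  (forall n, c * Rpower (INR n + 1) (/ rho) <= Cmod (a n)) ->
  Rabs y < T -> Rabs (dgam p (a n) y) <= AnT p a c rho T n.
Proof.
  intros Hc Hrho HT Hup Hlow Hy.
  assert (HA : 0 < Cmod (a n)) by (apply Cmod_gt_0, a_neq0; auto).
  assert (HAp : 0 < Cmod (a n) ^ p) by (apply pow_lt; auto).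
  assert (Hyp : Rabs y ^ p <= T ^ p) by (apply pow_incr; split; [apply Rabs_pos|lra]).
  pose proof (dgam_bound p (a n) y (Hup n)) as D.
  assert (Hm : 0 < Cmod (a n - RtoC y)) by (apply Cmod_gt_0, a_minus_t_neq0; auto).
  unfold AnT. destruct lt_dec as [Hlt|Hge].
  - assert (Im (a n) <= Cmod (a n - RtoC y)).
    { pose proof (Cmod_ge_Im (a n - RtoC y)). simpl in H. rewrite Ropp_0, Rplus_0_r in H.
      unfold Im in *. rewrite Rabs_right in H. lra. specialize (Hup n). unfold Im in Hup. lra. }
    assert (2 * Rabs y ^ p / (Cmod (a n) ^ p * Cmod (a n - RtoC y)) <=
            2 * T ^ p / (Cmod (a n) ^ p * Im (a n))).
    { unfold Rdiv. apply Rmult_le_compat. pose proof (pow_le _ p (Rabs_pos y)); lra.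
      left; apply Rinv_0_lt_compat; nra. lra.
      apply Rinv_le_contravar. apply Rmult_lt_0_compat; auto. apply Rmult_le_compat_l; lra. }
    assert (0 <= 4 * T ^ p * (Rabs 1 / c) ^ S p * Rpower (INR n + 1) (- (INR (S p) / rho))).
    { apply Rmult_le_pos. apply Rmult_le_pos. apply Rmult_le_pos. lra. apply pow_le; lra.
      apply pow_le. unfold Rdiv. apply Rmult_le_pos. apply Rabs_pos. left; apply Rinv_0_lt_compat; auto.
      left; apply rp_pos. }
    lra.
  - rewrite Rplus_0_l.
    assert (HX : 0 < Rpower (2 * T / c) rho) by apply rp_pos.
    destruct (up_nat _ HX) as [HN _]. fold (N0T c rho T) in HN.
    assert (INR (N0T c rho T) <= INR n) by (apply le_INR; lia).
    assert (H2T : 2 * T <= Cmod (a n)).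
    { eapply Rle_trans; [|apply Hlow].
      assert (2 * T / c <= Rpower (INR n + 1) (/ rho)).
      { replace (2 * T / c) with (Rpower (Rpower (2 * T / c) rho) (/ rho)).
        apply Rle_Rpower_l. left; apply Rinv_0_lt_compat; auto. lra.
        rewrite Rpower_mult, Rinv_r, Rpower_1 by (try apply Rdiv_lt_0_compat; lra). reflexivity. }
      apply Rmult_le_reg_l with (/ c). apply Rinv_0_lt_compat; auto.
      rewrite <- (Rmult_assoc (/ c) c), Rinv_l by lra. rewrite Rmult_1_l. unfold Rdiv in H0. lra. }
    assert (Cmod (a n) / 2 <= Cmod (a n - RtoC y)).
    { pose proof (Cmod_triangle (a n - RtoC y) (RtoC y)). rewrite Cmod_R in H0.
      replace (a n - RtoC y + RtoC y)%C with (a n) in H0 by ring. lra. }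
    eapply Rle_trans. exact D.
    apply Rle_trans with (4 * T ^ p * (Rabs 1 / Cmod (a n)) ^ S p).
    + rewrite Rabs_R1. unfold Rdiv. rewrite Rmult_1_l, pow_inv. simpl pow.
      apply Rle_trans with (2 * T ^ p * / (Cmod (a n) ^ p * (Cmod (a n) / 2))).
      apply Rmult_le_compat. pose proof (pow_le _ p (Rabs_pos y)); lra.
      left; apply Rinv_0_lt_compat; nra. lra.
      apply Rinv_le_contravar. nra. apply Rmult_le_compat_l; lra.
      apply Req_le. field. lra.
    + rewrite !Rmult_assoc. apply Rmult_le_compat_l. lra. apply Rmult_le_compat_l. apply pow_le; lra.
      apply u_pow_bound; auto.
Qed.

Lemma AnT_sum p a c rho T : 0 < c -> 0 < rho -> rho < INR (S p) -> 0 < T -> (forall j, 0 < Im (a j)) ->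
  exists B, forall M, sumN (AnT p a c rho T) M <= B.
Proof.
  intros Hc Hrho Hrp HT Hup.
  assert (Hs : 1 < INR (S p) / rho).
  { apply Rmult_lt_reg_r with rho; auto. unfold Rdiv. rewrite Rmult_assoc, Rinv_l; lra. }
  set (N0 := N0T c rho T).
  set (F1 := fun n => if lt_dec n N0 then 2 * T ^ p / (Cmod (a n) ^ p * Im (a n)) else 0).
  set (E := 4 * T ^ p * (Rabs 1 / c) ^ S p).
  assert (HF1 : forall n, 0 <= F1 n).
  { intros n. unfold F1. assert (HA : 0 < Cmod (a n)) by (apply Cmod_gt_0, a_neq0; auto).
    destruct lt_dec; [|lra]. apply Rlt_le, Rdiv_lt_0_compat. apply Rmult_lt_0_compat. lra. apply pow_lt; lra.
    apply Rmult_lt_0_compat. apply pow_lt; lra. auto. }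
  assert (HE : 0 <= E).
  { unfold E. apply Rmult_le_pos. apply Rmult_le_pos. lra. apply pow_le; lra.
    apply pow_le. unfold Rdiv. apply Rmult_le_pos. apply Rabs_pos. left; apply Rinv_0_lt_compat; auto. }
  exists (sumN F1 N0 + E * (1 + 1 / (INR (S p) / rho - 1))).
  intros M. unfold AnT. fold N0. fold F1. fold E.
  rewrite sumN_plus. apply Rplus_le_compat.
  - apply Rle_trans with (sumN F1 (N0 + M)). apply sumN_mono; auto; lia.
    rewrite sumN_split. assert (sumN (fun k => F1 (N0 + k)%nat) M <= 0).
    { apply Rle_trans with (sumN (fun _ => 0) M). apply sumN_le. intros k _. unfold F1.
      destruct lt_dec. lia. lra. rewrite sumN_const. lra. }
    lra.
  - rewrite sumN_scal. apply Rmult_le_compat_l; auto. apply sum_s_bound; auto.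
Qed.

Lemma cont_ext f g x : (forall y, f y = g y) -> continuity_pt f x -> continuity_pt g x.
Proof. intros H C. replace g with f; auto. apply functional_extensionality; auto. Qed.

Lemma cont_dsp p a y : continuity_pt (fun s => dsp p a s) y.
Proof.
  apply derivable_continuous_pt.
  induction p; cbn [dsp].
  - exists 0. apply dpl_const.
  - destruct IHp as [l Hl]. exists (l + INR p * y ^ Nat.pred p * cc a (S p)).
    apply dpl_plus. exact Hl. apply dpl_scal_r. apply derivable_pt_lim_pow.
Qed.

Lemma cont_dgam p (a : C) y : 0 < Im a -> continuity_pt (dgam p a) y.
Proof.
  intros Hb. unfold dgam.
  apply (cont_ext (fun s => (fun s => -2 * Im a / ((Re a - s) ^ 2 + Im a ^ 2)) s - (fun s => 2 * dsp p a s) s)).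
  reflexivity.
  apply (continuity_pt_minus (fun s => -2 * Im a / ((Re a - s) ^ 2 + Im a ^ 2))).
  - reg. pose proof (pow2_ge_0 (Re a - y)). pose proof (pow_lt _ 2 Hb). lra.
  - apply (continuity_pt_scal (fun s => dsp p a s)). apply cont_dsp.
Qed.

Lemma abs_conv' F : (exists B, forall M, sumN (fun n => Rabs (F n)) M <= B) ->
  {l | Un_cv (fun N => sum_f_R0 F N) l}.
Proof.
  intros H. apply cv_cauchy_2, cauchy_abs, cv_cauchy_1.
  apply growing_cv.
  - intros n. simpl. pose proof (Rabs_pos (F (S n))). lra.
  - destruct H as [B H]. exists B. intros x [i ->]. rewrite sumN_f_R0. apply H.
Qed.

Lemma d_SP p (a : nat -> C) (Hup : forall j, 0 < Im (a j)) n x :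
  derivable_pt_lim (fun y => sum_f_R0 (fun k => gam p (a k) y) n) x (sum_f_R0 (fun k => dgam p (a k) x) n).
Proof.
  induction n; simpl. apply d_gam; auto.
  apply (dpl_plus (fun y => sum_f_R0 (fun k => gam p (a k) y) n) (fun y => gam p (a (S n)) y)). auto.
  apply d_gam; auto.
Qed.

Lemma cont_SP p (a : nat -> C) (Hup : forall j, 0 < Im (a j)) n x :
  continuity_pt (fun y => sum_f_R0 (fun k => dgam p (a k) y) n) x.
Proof.
  induction n; simpl. apply cont_dgam; auto.
  apply (continuity_pt_plus (fun y => sum_f_R0 (fun k => dgam p (a k) y) n) (fun y => dgam p (a (S n)) y)). auto.
  apply cont_dgam; auto.
Qed.

Lemma sumN_ext F G N : (forall n, F n = G n) -> sumN F N = sumN G N.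
Proof. intros H; induction N; simpl; auto. rewrite IHN, H; auto. Qed.

Lemma g_exists p (a : nat -> C) c rho :
  0 < c -> 0 < rho -> rho < INR (S p) -> (forall j, 0 < Im (a j)) ->
  (forall n, c * Rpower (INR n + 1) (/ rho) <= Cmod (a n)) ->
  exists g gp : R -> R,
    (forall t, Un_cv (fun N => sum_f_R0 (fun n => gam p (a n) t) N) (g t)) /\
    (forall t, derivable_pt_lim g t (gp t)) /\ (forall t, continuity_pt gp t).
Proof.
  intros Hc Hrho Hrp Hup Hlow.
  set (gs := fun n t => gam p (a n) t).
  set (ds := fun n t => dgam p (a n) t).
  assert (cvg : forall t, {l | Un_cv (fun N => SP gs N t) l}).
  { intros t. apply abs_conv'. eexists. intros M. unfold gs. apply (gam_sum_bound p a c rho t); auto. }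
  assert (cvn : forall T : posreal, CVN_r ds T).
  { intros T. exists (AnT p a c rho T).
    assert (HT := cond_pos T).
    destruct (abs_conv' (fun k => Rabs (AnT p a c rho T k))) as [l Hl].
    { destruct (AnT_sum p a c rho T Hc Hrho Hrp HT Hup) as [B HB]. exists B. intros M.
      rewrite (sumN_ext _ (AnT p a c rho T)). apply HB.
      intros n. rewrite Rabs_Rabsolu. apply Rabs_right, Rle_ge, AnT_nonneg; auto. }
    exists l. split. exact Hl.
    intros n y Hy. unfold Boule in Hy. rewrite Rminus_0_r in Hy.
    apply AnT_bound; auto. }
  assert (cvd : forall t, {l | Un_cv (fun N => SP ds N t) l}).
  { intros t. apply abs_conv'.
    assert (HT : 0 < Rabs t + 1) by (pose proof (Rabs_pos t); lra).
    destruct (AnT_sum p a c rho (Rabs t + 1) Hc Hrho Hrp HT Hup) as [B HB]. exists B. intros M.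
    eapply Rle_trans; [|apply HB]. apply sumN_le. intros n _. apply AnT_bound; auto. lra. }
  exists (SFL gs cvg), (SFL ds cvd).
  assert (HU : forall T : posreal, CVU (fun n => SP ds n) (SFL ds cvd) 0 T).
  { intros T. apply CVN_CVU. apply cvn. }
  split; [|split].
  - intros t. unfold SFL. destruct (cvg t) as [l Hl]. exact Hl.
  - intros t. assert (HT : 0 < Rabs t + 1) by (pose proof (Rabs_pos t); lra).
    set (T := mkposreal _ HT).
    apply (CVU_derivable (fun n => SP gs n) (fun n => SP ds n) (SFL gs cvg) (SFL ds cvd) 0 T (HU T)).
    + intros x _. unfold SFL. destruct (cvg x) as [l Hl]. exact Hl.
    + intros n x _. apply d_SP; auto.
    + unfold Boule; simpl. rewrite Rminus_0_r. lra.
  - intros t. assert (HT : 0 < Rabs t + 1) by (pose proof (Rabs_pos t); lra).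
    set (T := mkposreal _ HT).
    apply (CVU_continuity (fun n => SP ds n) (SFL ds cvd) 0 T (HU T)).
    + intros n x _. apply cont_SP; auto.
    + unfold Boule; simpl. rewrite Rminus_0_r. lra.
Qed.

Definition Mc p c rho : R :=
  Kc p * (2 / (1 - INR p / rho) + 1 / (INR (S p) / rho - 1)) * Rpower (/ c) rho.

Lemma final_bound p (a : nat -> C) c rho (gx x : R) :
  0 < c -> 0 < rho -> INR p < rho < INR (S p) -> (forall j, 0 < Im (a j)) ->
  (forall n, c * Rpower (INR n + 1) (/ rho) <= Cmod (a n)) ->
  Un_cv (fun N => sum_f_R0 (fun n => gam p (a n) x) N) gx ->
  c <= Rabs x -> Rabs gx <= Mc p c rho * Rpower (Rabs x) rho.
Proof.
  intros Hc Hrho [Hpr Hrp] Hup Hlow Hcv Hx.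
  set (sig := INR p / rho). set (s := INR (S p) / rho).
  assert (Hsig : 0 <= sig < 1).
  { unfold sig. split. apply Rdiv_le_0_compat. apply pos_INR. auto.
    apply Rmult_lt_reg_r with rho; auto. unfold Rdiv. rewrite Rmult_assoc, Rinv_l; lra. }
  assert (Hs : 1 < s).
  { apply Rmult_lt_reg_r with rho; auto. unfold s, Rdiv. rewrite Rmult_assoc, Rinv_l; lra. }
  set (Y := Rabs x / c).
  assert (HY : 1 <= Y).
  { unfold Y. apply Rmult_le_reg_r with c; auto. unfold Rdiv. rewrite Rmult_assoc, Rinv_l; lra. }
  assert (HYr : 1 <= Rpower Y rho).
  { rewrite <- (rp_1_l rho). apply Rle_Rpower_l; lra. }
  set (N := Z.to_nat (up (Rpower Y rho))).
  destruct (up_nat (Rpower Y rho)) as [HN1 HN2]. lra. fold N in HN1, HN2.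
  assert (HN : (1 <= N)%nat).
  { destruct N. simpl in HN1. lra. lia. }
  assert (HK : 0 <= Kc p).
  { unfold Kc. pose proof PI_RGT_0. pose proof (pos_INR p). apply Rmult_le_pos. lra. apply pow_le; lra. }
  assert (HYp : 0 < Y) by lra.
  assert (B1 : Kc p * Y ^ p * (Rpower (INR N) (1 - sig) / (1 - sig)) <= Kc p * (2 / (1 - sig)) * Rpower Y rho).
  { assert (Rpower (INR N) (1 - sig) <= 2 * Rpower (Rpower Y rho) (1 - sig)).
    { eapply Rle_trans. apply Rle_Rpower_l with (b := 2 * Rpower Y rho). lra. split. lra. lra.
      rewrite <- Rpower_mult_distr by lra. apply Rmult_le_compat_r. left; apply rp_pos.
      rewrite <- (Rpower_1 2) at 2 by lra. apply Rle_Rpower; lra. }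
    rewrite Rpower_mult in H. rewrite <- (Rpower_pow p Y HYp).
    assert (Rpower Y (INR p) * Rpower Y (rho * (1 - sig)) = Rpower Y rho).
    { rewrite <- Rpower_plus. f_equal. unfold sig. field. lra. }
    pose proof (rp_pos Y (INR p)).
    apply Rle_trans with (Kc p / (1 - sig) * (Rpower Y (INR p) * Rpower (INR N) (1 - sig))).
    apply Req_le. field. lra.
    apply Rle_trans with (Kc p / (1 - sig) * (Rpower Y (INR p) * (2 * Rpower Y (rho * (1 - sig))))).
    apply Rmult_le_compat_l. apply Rdiv_le_0_compat; lra. apply Rmult_le_compat_l; lra.
    rewrite <- H0. apply Req_le. field. lra. }
  assert (B2 : Kc p * Y ^ S p * (Rpower (INR N) (1 - s) / (s - 1)) <= Kc p * (1 / (s - 1)) * Rpower Y rho).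
  { assert (Rpower (INR N) (1 - s) <= Rpower (Rpower Y rho) (1 - s)).
    { apply rp_le_neg. split. apply rp_pos. lra. lra. }
    rewrite Rpower_mult in H. rewrite <- (Rpower_pow (S p) Y HYp).
    assert (Rpower Y (INR (S p)) * Rpower Y (rho * (1 - s)) = Rpower Y rho).
    { rewrite <- Rpower_plus. f_equal. unfold s. field. lra. }
    pose proof (rp_pos Y (INR (S p))).
    apply Rle_trans with (Kc p / (s - 1) * (Rpower Y (INR (S p)) * Rpower (INR N) (1 - s))).
    apply Req_le. field. lra.
    apply Rle_trans with (Kc p / (s - 1) * (Rpower Y (INR (S p)) * Rpower Y (rho * (1 - s)))).
    apply Rmult_le_compat_l. apply Rdiv_le_0_compat; lra. apply Rmult_le_compat_l; lra.
    rewrite H0. apply Req_le. field. lra. }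
  assert (Hsum : forall M, sumN (fun n => Rabs (gam p (a n) x)) M <= Kc p * (2 / (1 - sig) + 1 / (s - 1)) * Rpower Y rho).
  { intros M. apply Rle_trans with (sumN (fun n => Rabs (gam p (a n) x)) (N + M)).
    apply sumN_mono. intros; apply Rabs_pos. lia.
    rewrite sumN_split.
    assert (S1 : sumN (fun n => Rabs (gam p (a n) x)) N <= Kc p * Y ^ p * (Rpower (INR N) (1 - sig) / (1 - sig))).
    { eapply Rle_trans. apply sumN_le with (G := fun n => Kc p * Y ^ p * Rpower (INR n + 1) (- sig)).
      intros n _. destruct (gam_bound p (a n) x (Hup n)) as [G _]. eapply Rle_trans. exact G.
      rewrite Rmult_assoc. apply Rmult_le_compat_l. auto. apply u_pow_bound; auto.
      apply Cmod_gt_0, a_neq0; auto.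
      rewrite sumN_scal. apply Rmult_le_compat_l. apply Rmult_le_pos; auto. apply pow_le; lra.
      apply L1; auto. }
    assert (S2 : sumN (fun k => Rabs (gam p (a (N + k)%nat) x)) M <= Kc p * Y ^ S p * (Rpower (INR N) (1 - s) / (s - 1))).
    { eapply Rle_trans. apply sumN_le with (G := fun k => Kc p * Y ^ S p * Rpower (INR (N + k) + 1) (- s)).
      intros n _. destruct (gam_bound p (a (N + n)%nat) x (Hup _)) as [_ G]. eapply Rle_trans. exact G.
      rewrite Rmult_assoc. apply Rmult_le_compat_l. auto. apply u_pow_bound; auto.
      apply Cmod_gt_0, a_neq0; auto.
      rewrite sumN_scal. apply Rmult_le_compat_l. apply Rmult_le_pos; auto. apply pow_le; lra.
      apply L2; auto. }
    lra. }
  pose proof (lim_bound _ _ _ Hcv Hsum) as Hg.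
  eapply Rle_trans. exact Hg.
  unfold Mc. fold sig s. unfold Y, Rdiv. rewrite <- (Rpower_mult_distr (Rabs x) (/ c)).
  apply Req_le. ring.
  apply Rlt_le_trans with c; auto. apply Rinv_0_lt_compat; auto.
Qed.



Lemma prod_formula p (a : nat -> C) (Hup : forall j, 0 < Im (a j)) N t :
  partial_prod p a N (RtoC t) =
  (cos (sumN (fun n => gam p (a n) t) N), sin (sumN (fun n => gam p (a n) t) N)).
Proof.
  induction N; cbn [partial_prod sumN].
  - rewrite cos_0, sin_0. reflexivity.
  - rewrite IHN, factor_eq by auto. apply unit_mult.
Qed.

Lemma Un_cv_shift F l : Un_cv (fun N => sum_f_R0 F N) l -> Un_cv (fun N => sumN F N) l.
Proof.
  intros H eps Heps. destruct (H eps Heps) as [N HN]. exists (S N). intros n Hn.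
  destruct n. lia. rewrite <- sumN_f_R0. apply HN. lia.
Qed.

Lemma lim_C (u v : nat -> R) x y : Un_cv u x -> Un_cv v y ->
  filterlim (fun N => (u N, v N) : C) eventually (locally ((x, y) : C)).
Proof.
  intros Hu Hv. apply filterlim_locally. intros eps.
  destruct (Hu eps (cond_pos eps)) as [N1 H1]. destruct (Hv eps (cond_pos eps)) as [N2 H2].
  exists (max N1 N2). intros n Hn.
  unfold ball; simpl. unfold prod_ball. simpl. split; unfold ball; simpl; unfold AbsRing_ball, abs, minus, plus, opp; simpl.
  - apply (H1 n). lia.
  - apply (H2 n). lia.
Qed.

Theorem lemma2p3
  (a : nat -> C) (C0 rho : R) (p : nat) (f : C -> C) (df : R -> C)
  (Ha_upper : forall j, 0 < Im (a j))
  (Ha_sorted : forall j, Cmod (a j) <= Cmod (a (S j)))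
  (Hcount : forall r : R, 1 <= r ->
     forall l : list nat, NoDup l -> List.Forall (fun j => Cmod (a j) <= r) l ->
       INR (length l) <= C0 * Rpower r rho)
  (Hrho_pos : 0 < rho)
  (Hrho_nonint : forall k : Z, rho <> IZR k)
  (Hp : INR p < rho < INR (S p))
  (Hf : forall z : C, (forall n, z <> a n) ->
     filterlim (fun N => partial_prod p a N z) eventually (locally (f z)))
  (Hdf : forall t : R, is_derive f (RtoC t) (df t)) :
  exists M X : R, forall x : R, X <= Rabs x ->
    exists I : C, is_RInt (fun t => (df t / f (RtoC t))%C) 0 x I /\
                  Cmod I <= M * Rpower (Rabs x) rho.
Proof.
  destruct (lower_bound a C0 rho Hrho_pos Ha_upper Ha_sorted Hcount) as [c [Hc Hlow]].
  destruct Hp as [Hpr Hrp].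
  destruct (g_exists p a c rho Hc Hrho_pos Hrp Ha_upper Hlow) as [g [gp [Hg [Hgd Hgc]]]].
  assert (Hfr : forall t, f (RtoC t) = (cos (g t), sin (g t))).
  { intros t.
    assert (Hne : forall n, RtoC t <> a n).
    { intros n H. specialize (Ha_upper n). rewrite <- H in Ha_upper. simpl in Ha_upper. lra. }
    pose proof (Hf _ Hne) as H1.
    assert (H2 : filterlim (fun N => partial_prod p a N (RtoC t)) eventually
                   (locally ((cos (g t), sin (g t)) : C))).
    { eapply filterlim_ext. intros N. symmetry. apply prod_formula. auto.
      apply lim_C.
      - apply (continuity_seq cos). apply continuity_cos. apply Un_cv_shift, Hg.
      - apply (continuity_seq sin). apply continuity_sin. apply Un_cv_shift, Hg. }
    exact (filterlim_locally_unique _ _ _ H1 H2). }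
  assert (Hdfr : forall t, df t = (- sin (g t) * gp t, cos (g t) * gp t)).
  { intros t. destruct (C_deriv_real f t (df t) (Hdf t)) as [HR HI].
    apply (dpl_ext _ (fun s => cos (g s))) in HR; [|intros; rewrite Hfr; reflexivity].
    apply (dpl_ext _ (fun s => sin (g s))) in HI; [|intros; rewrite Hfr; reflexivity].
    assert (DR : derivable_pt_lim (fun s => cos (g s)) t (- sin (g t) * gp t)).
    { apply dpl_comp. apply Hgd. apply derivable_pt_lim_cos. }
    assert (DI : derivable_pt_lim (fun s => sin (g s)) t (cos (g t) * gp t)).
    { apply dpl_comp. apply Hgd. apply derivable_pt_lim_sin. }
    pose proof (uniqueness_limite _ _ _ _ HR DR). pose proof (uniqueness_limite _ _ _ _ HI DI).
    apply injective_projections; simpl; auto. }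
  assert (Hg0 : g 0 = 0).
  { apply (UL_sequence _ _ _ (Hg 0)). intros eps Heps. exists 0%nat. intros n _.
    rewrite sum_eq_R0. unfold Rdist. rewrite Rminus_0_r, Rabs_R0. auto.
    intros; apply gam_0. }
  exists (Mc p c rho), c. intros x Hx.
  exists ((0, g x - g 0) : C). split.
  - apply is_RInt_ext with (f := fun t => (0, gp t) : C).
    { intros t _. rewrite Hfr, Hdfr. pose proof (sin2_cos2 (g t)) as E. unfold Rsqr in E.
      unfold Cdiv, Cinv, Cmult. cbn [fst snd].
      replace (cos (g t) ^ 2 + sin (g t) ^ 2) with 1 by (rewrite <- E; ring).
      apply injective_projections; cbn [fst snd].
      + lazymatch goal with |- ?l = ?r => change (@eq R l r) end. unfold Rdiv. ring.
      + lazymatch goal with |- ?l = ?r => change (@eq R l r) end. transitivity (gp t * (sin (g t) * sin (g t) + cos (g t) * cos (g t))); [rewrite E; ring | unfold Rdiv; rewrite Rinv_1; ring]. }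
    apply (is_RInt_fct_extend_pair (U:=R_NormedModule) (V:=R_NormedModule) (fun t => (0, gp t))).
    + cbn [fst]. assert (H := is_RInt_const 0 x (0:R)).
      match type of H with is_RInt _ _ _ ?v => replace v with (0:R) in H by (unfold scal; simpl; unfold mult; simpl; ring) end.
      exact H.
    + cbn [snd]. apply (is_RInt_derive g gp).
      * intros t _. apply is_derive_Reals. apply Hgd.
      * intros t _. apply continuity_pt_filterlim. apply Hgc.
  - rewrite Hg0, Rminus_0_r. unfold Cmod. cbn [fst snd].
    replace (0 ^ 2 + g x ^ 2) with (Rsqr (g x)) by (unfold Rsqr; ring).
    rewrite sqrt_Rsqr_abs.
    apply (final_bound p a c rho (g x) x); auto.
Qed.
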